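(* Let $X_1,\dots,X_N$ be independent nonnegative random variables and $\theta>0$. Suppose $\overline{F}_{X_1}(x)=O(x^{-\theta})$ and, for every $2\le j\le N$, there exists $\varphi_j\in\mathfrak{F}$ with $\overline{F}_{X_j}(\varphi_j(x))=O(x^{-\theta})$ and $\mathbb{E}[X_j^\theta]<\infty$. Then $\overline{F}_{\prod_{i=1}^N X_i}(x)=O(x^{-\theta})$.
   Context: $\overline{F}_Y(x)=\Pr(Y>x)$; $f(x)=O(g(x))$ means $\limsup_{x\to\infty}f(x)/g(x)<\infty$. $\mathfrak{F}$ is the class of functions $\varphi:\mathbb{R}_{\ge0}\to\mathbb{R}_{\ge0}$ with $\lim_{x\to\infty}\varphi(x)=\infty$ and $\lim_{x\to\infty}\varphi(x)/x=0$. *)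

(* Defs.v *)
From HB Require Import structures.
From mathcomp Require Import all_boot all_order all_algebra.
From mathcomp Require Import all_classical all_reals all_analysis.
Set Implicit Arguments. Unset Strict Implicit. Unset Printing Implicit Defensive.
Import Order.TTheory GRing.Theory Num.Theory.
Import numFieldNormedType.Exports.
Local Open Scope classical_set_scope.
Local Open Scope ring_scope.

Definition survival d (T : measurableType d) (R : realType)
  (P : probability T R) (Y : T -> R) (x : R) : R :=
  fine (P [set t | x < Y t]).

Definition mutually_independent d (T : measurableType d) (R : realType)
  (P : probability T R) (n : nat) (X : 'I_n -> T -> R) : Prop :=
  forall (J : {set 'I_n}) (B : 'I_n -> set R),
    (forall i, i \in J -> measurable (B i)) ->
    P (\bigcap_(i in [set j | j \in J]) (X i @^-1` B i)) =
    (\prod_(i in J) P (X i @^-1` B i))%E.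

(* The class \mathfrak{F}: phi : R_{>=0} -> R_{>=0} with phi x -> +oo and
   phi x / x -> 0 as x -> +oo.  (phi is given on all of R; only its values
   on [0, +oo) are constrained.) *)
Definition frakF (R : realType) (phi : R -> R) : Prop :=
  (forall x, 0 <= x -> 0 <= phi x) /\
  (phi x @[x --> +oo] --> +oo) /\
  ((fun x => phi x / x) x @[x --> +oo] --> (0 : R)).

(* f(x) = O(g(x)) as x -> +oo, i.e. limsup_{x->oo} f(x)/g(x) < oo, written
   (for g eventually positive, as in all uses here) as: there is a constant C
   with f x <= C * g x for all sufficiently large x. *)
Definition bigO_infty (R : realType) (f g : R -> R) : Prop :=
  exists C : R, \forall x \near +oo, f x <= C * g x.

(* Main.v *)
Require Import Defs.
From HB Require Import structures.
From mathcomp Require Import all_boot all_order all_algebra.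
From mathcomp Require Import all_classical all_reals all_analysis.
From mathcomp Require Import measurable_realfun.
From mathcomp Require Import ring.
Import Order.TTheory GRing.Theory Num.Theory.
Import numFieldNormedType.Exports.
Local Open Scope classical_set_scope.
Local Open Scope ring_scope.
Lemma nearP (R : realType) (Q : R -> Prop) :
  (\forall x \near +oo, Q x) -> exists M : R, forall x, M < x -> Q x.
Proof. case=> M [_ HM]. by exists M. Qed.

Lemma nearP2 (R : realType) (Q : R -> Prop) M :
  (forall x, M < x -> Q x) -> (\forall x \near +oo, Q x).
Proof. move=> H; exists M; split => //. exact: num_real. Qed.

Definition mu d (T : measurableType d) (R : realType) (P : probability T R)
  (A : set T) : R := fine (P A).
Arguments mu {d T R}.

Lemma muE {d} {T : measurableType d} {R : realType} (P : probability T R) A :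
  measurable A -> P A = (mu P A)%:E.
Proof.
move=> mA; rewrite /mu fineK // ge0_fin_numE ?measure_ge0 //.
exact: (le_lt_trans (probability_le1 P mA) (ltry _)).
Qed.

Lemma mu_ge0 {d} {T : measurableType d} {R : realType} (P : probability T R) A :
  0 <= mu P A.
Proof. exact/fine_ge0/measure_ge0. Qed.

Lemma muT {d} {T : measurableType d} {R : realType} (P : probability T R) :
  mu P setT = 1.
Proof. by rewrite /mu probability_setT. Qed.

Lemma mu0 {d} {T : measurableType d} {R : realType} (P : probability T R) :
  mu P set0 = 0.
Proof. by rewrite /mu measure0. Qed.

Lemma mu_le {d} {T : measurableType d} {R : realType} (P : probability T R) A B :
  measurable A -> measurable B -> A `<=` B -> mu P A <= mu P B.
Proof.
move=> mA mB AB; rewrite -lee_fin -!muE //.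
by apply: le_measure => //; rewrite inE.
Qed.

Lemma muU {d} {T : measurableType d} {R : realType} (P : probability T R) A B :
  measurable A -> measurable B -> mu P (A `|` B) <= mu P A + mu P B.
Proof.
move=> mA mB; rewrite -lee_fin EFinD -!muE //; last exact: measurableU.
exact: measureU2.
Qed.

Lemma mu_bigU {d} {T : measurableType d} {R : realType} (P : probability T R)
  M (F : nat -> set T) : (forall m, measurable (F m)) ->
  mu P (\big[setU/set0]_(m < M) F m) <= \sum_(m < M) mu P (F m).
Proof.
move=> mF; elim: M => [|M IH]; first by rewrite !big_ord0 mu0.
have mB : forall M, measurable (\big[setU/set0]_(m < M) F m).
  by move=> n; elim: n => [|n IHn]; rewrite ?big_ord0 // big_ord_recr /=; apply: measurableU.
rewrite !big_ord_recr /=. apply: le_trans (muU P _ _ (mB M) (mF M)) _.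
by rewrite lerD2r.
Qed.

Definition Rect {d} {T : measurableType d} {R : realType} (X : nat -> T -> R)
  (n : nat) (B : nat -> set R) : set T :=
  [set t | forall i, (1 <= i <= n)%N -> B i (X i t)].

Lemma mpre {d} {T : measurableType d} {R : realType} (f : T -> R) (A : set R) :
  measurable_fun setT f -> measurable A -> measurable (f @^-1` A).
Proof. by move=> mf mA; rewrite -[f @^-1` _]setTI; exact: mf. Qed.

Lemma Rect_measurable {d} {T : measurableType d} {R : realType} (X : nat -> T -> R)
  n B : (forall i, measurable_fun setT (X i)) -> (forall i, measurable (B i)) ->
  measurable (Rect X n B).
Proof.
move=> mX mB; elim: n => [|n IH].
  rewrite (_ : Rect X 0 B = setT) //.
  by apply/seteqP; split => t // _ i /andP[/leq_trans H /H].
rewrite (_ : Rect X n.+1 B = Rect X n B `&` (X n.+1 @^-1` B n.+1)).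
  by apply: measurableI => //; exact: mpre.
apply/seteqP; split => t /=.
  move=> H; split; last by apply: H; rewrite leqnn andbT.
  by move=> i /andP[i1 iN]; apply: H; rewrite i1 (leq_trans iN).
move=> [H1 H2] i /andP[i1]; rewrite leq_eqVlt => /orP[/eqP -> //|iN].
by apply: H1; rewrite i1.
Qed.

Lemma indep_rect {d} {T : measurableType d} {R : realType} (P : probability T R)
  N (X : nat -> T -> R) :
  mutually_independent P (fun i : 'I_N => X i.+1) ->
  forall B, (forall i, measurable (B i)) ->
  P (Rect X N B) = (\prod_(i in [set: 'I_N]%SET) P (X i.+1 @^-1` B i.+1))%E.
Proof.
move=> HI B mB; rewrite -(HI [set: 'I_N]%SET (fun i => B i.+1)); last by move=> i _; exact: mB.
congr (P _); apply/seteqP; split => t /=.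
  by move=> H i _; apply: H; rewrite /= ltn_ord.
move=> H [|i] // iN; apply: (H (Ordinal iN)); by rewrite /mkset inE.
Qed.

Definition upd {R : realType} (B : nat -> set R) (j : nat) (C : set R) :=
  fun i => if i == j then C else B i.

Lemma indep_upd {d} {T : measurableType d} {R : realType} (P : probability T R)
  N (X : nat -> T -> R) :
  (forall i, measurable_fun setT (X i)) ->
  mutually_independent P (fun i : 'I_N => X i.+1) ->
  forall B j C, (forall i, measurable (B i)) -> (1 <= j <= N)%N -> B j = setT ->
  measurable C ->
  mu P (Rect X N (upd B j C)) = mu P (X j @^-1` C) * mu P (Rect X N B).
Proof.
move=> mX HI B [|k] C mB // kN Bj mC.
have mB' : forall i, measurable (upd B k.+1 C i).
  by move=> i; rewrite /upd; case: ifP.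
have := indep_rect P N X HI _ mB'; have := indep_rect P N X HI _ mB.
rewrite (bigD1 (Ordinal kN)) ?inE //= => E1.
rewrite (bigD1 (Ordinal kN)) ?inE //= => E2.
rewrite Bj preimage_setT probability_setT mul1e in E1.
rewrite /mu E2 E1 /upd eqxx.
rewrite (eq_bigr (fun i : 'I_N => P (X i.+1 @^-1` B i.+1))).
  rewrite fineM //; first by rewrite muE //; exact: mpre.
  by rewrite -E1 muE //; exact: Rect_measurable.
move=> i /andP[_ ik]; rewrite ifF //; apply/negbTE.
by apply: contra ik => /eqP [] ik; apply/eqP/val_inj.
Qed.

Lemma pw {R : realType} (th y : R) M : 0 < th -> 0 <= y ->
  \sum_(m < M) ((2:R) ^+ m) `^ th *
     (if (2 ^+ m <= y) && (y < 2 ^+ m.+1) then 1 else 0)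
  <= (if y < 2 ^+ M then y `^ th else 0).
Proof.
move=> th0 y0; elim: M => [|M IH].
  by rewrite big_ord0; case: ifP => _; rewrite ?powR_ge0.
have h2 : (2:R) ^+ M < 2 ^+ M.+1.
  by rewrite exprS ltr_pMl ?exprn_gt0 // ltr1n.
rewrite big_ord_recr /=.
have [yM|yM] := ltP y (2 ^+ M).
  by rewrite (lt_trans yM h2) /= mulr0 addr0; move: IH; rewrite yM.
move: IH; rewrite ltNge yM /= => IH.
case: ifP => h; rewrite ?mulr1 ?mulr0.
  rewrite -[y `^ th]add0r; apply: lerD => //; apply: ge0_ler_powR; rewrite ?nnegrE //.
  - exact: ltW.
by rewrite addr0.
Qed.

Definition shell {R : realType} (m : nat) : set R := `[(2:R) ^+ m, 2 ^+ m.+1[%classic.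

Lemma shell_measurable {R : realType} m : measurable (@shell R m).
Proof. exact: measurable_itv. Qed.

Lemma shell_indic {d} {T : measurableType d} {R : realType} (Y : T -> R) m x :
  \1_(Y @^-1` shell m) x =
  (if ((2:R) ^+ m <= Y x) && (Y x < 2 ^+ m.+1) then 1 else 0 : R).
Proof.
rewrite indicE; case: ifP => h.
  by rewrite mem_set //= /shell /= in_itv /= h.
by rewrite memNset //= /shell /= in_itv /= h.
Qed.

Lemma shell_sum {d} {T : measurableType d} {R : realType} (P : probability T R)
  (Y : T -> R) (th : R) (M : nat) : 0 < th ->
  measurable_fun setT Y -> (forall t, 0 <= Y t) ->
  ('E_P[fun t => (Y t `^ th)%R] < +oo)%E ->
  \sum_(m < M) ((2:R) ^+ m) `^ th * mu P (Y @^-1` shell m)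
  <= fine 'E_P[fun t => (Y t `^ th)%R].
Proof.
move=> th0 mY Y0 Efin.
have E0 := expectation_ge0 P (fun t => powR_ge0 (Y t) th).
rewrite -lee_fin fineK; last by rewrite ge0_fin_numE.
rewrite -sumEFin.
have mS : forall m, measurable (Y @^-1` (@shell R m)).
  by move=> m; apply: mpre => //; exact: shell_measurable.
have -> : \sum_(m < M) (((2:R) ^+ m) `^ th * mu P (Y @^-1` shell m))%:E =
  (\sum_(m < M) \int[P]_(x in setT) (((2:R) ^+ m) `^ th * \1_(Y @^-1` shell m) x)%:E)%E.
  apply: eq_bigr => m _.
  under eq_integral do rewrite EFinM.
  rewrite ge0_integralZl //.
  - by rewrite integral_indic // setIT EFinM -muE.
  - by apply/measurable_EFinP; exact: measurable_indic.
have mf : forall m : 'I_M, measurable_fun setT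
    (fun x => (((2:R) ^+ m) `^ th * \1_(Y @^-1` shell m) x)%:E).
  move=> m; apply/measurable_EFinP; apply: measurable_funM.
    exact: measurable_cst.
  exact: measurable_indic.
have f0 : forall (m : 'I_M) x, setT x ->
    (0 <= (((2:R) ^+ m) `^ th * \1_(Y @^-1` shell m) x)%:E)%E.
  by move=> m x _; rewrite lee_fin mulr_ge0 ?powR_ge0 ?indic_ge0.
rewrite -(ge0_integral_sum P measurableT mf f0).
rewrite expectation.unlock; apply: ge0_le_integral => //.
- by move=> x _; rewrite sumEFin lee_fin sumr_ge0 // => m _; rewrite mulr_ge0 ?powR_ge0 ?indic_ge0.
- under eq_fun do rewrite sumEFin.
  apply/measurable_EFinP; apply: measurable_sum => m.
  apply: measurable_funM; first exact: measurable_cst.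
  exact: measurable_indic.
- apply/measurable_EFinP.
  exact: (measurableT_comp (measurable_powR th) mY).
move=> x _; rewrite sumEFin lee_fin.
under eq_bigr do rewrite shell_indic.
apply: le_trans (pw th (Y x) M th0 (Y0 x)) _.
by case: ifP => _ //; rewrite powR_ge0.
Qed.

Lemma bigO_conv {R : realType} {f : R -> R} {th : R} :
  bigO_infty f (fun x => x `^ (- th)) ->
  exists C s0, 0 < s0 /\ forall s, s0 <= s -> f s * s `^ th <= C.
Proof.
case=> C /nearP [M HM]; exists C, (Num.max 1 (M + 1)); split.
  by apply: lt_le_trans (ltr01) _; rewrite le_max lexx.
move=> s; rewrite ge_max => /andP[s1 sM].
have s0 : 0 < s by apply: lt_le_trans ltr01 s1.
have Ms : M < s by apply: lt_le_trans sM; rewrite ltrDl ltr01.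
have := HM s Ms; rewrite powRN => H.
have p0 : 0 < s `^ th by apply: powR_gt0.
have := ler_wpM2r (ltW p0) H.
by rewrite mulfVK // gt_eqF.
Qed.

Lemma pow2_bound {R : realType} (y : R) : exists M : nat, y < 2 ^+ M.
Proof.
exists (Num.trunc y).+1; apply: lt_trans (truncnS_gt y) _.
rewrite -natrX ltr_nat; exact: ltn_expl.
Qed.

Lemma shell_exists {R : realType} (y : R) (M : nat) :
  1 <= y -> y < 2 ^+ M -> exists m : 'I_M, 2 ^+ m <= y < 2 ^+ m.+1.
Proof.
move=> y1; elim: M => [|M IH]; first by rewrite expr0 ltNge y1.
move=> yM; have [yM'|yM'] := ltP y (2 ^+ M).
  by have [m hm] := IH yM'; exists (widen_ord (leqnSn M) m).
by exists ord_max; rewrite /= yM' yM.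
Qed.

Definition Z {d} {T : measurableType d} {R : realType} (X : nat -> T -> R)
  (k : nat) (t : T) : R := \prod_(1 <= i < k.+1) X i t.

Lemma ZS {d} {T : measurableType d} {R : realType} (X : nat -> T -> R) k t :
  Z X k.+1 t = Z X k t * X k.+1 t.
Proof. by rewrite /Z big_nat_recr. Qed.

Lemma Z1 {d} {T : measurableType d} {R : realType} (X : nat -> T -> R) t :
  Z X 1 t = X 1%N t.
Proof. by rewrite /Z big_nat1. Qed.

Lemma Z_ge0 {d} {T : measurableType d} {R : realType} (X : nat -> T -> R) N k t :
  (k <= N)%N -> (forall i, (1 <= i <= N)%N -> forall t, 0 <= X i t) ->
  0 <= Z X k t.
Proof.
move=> kN X0; rewrite /Z big_seq_cond; apply: prodr_ge0 => i.
rewrite mem_index_iota => /andP[/andP[i1 ik] _]; apply: X0.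
by rewrite i1 /= (leq_trans _ kN) // -ltnS.
Qed.

Lemma Z_measurable {d} {T : measurableType d} {R : realType} (X : nat -> T -> R) k :
  (forall i, measurable_fun setT (X i)) -> measurable_fun setT (Z X k).
Proof. by move=> mX; apply: measurable_prod => i _. Qed.

Lemma mlt {d} {T : measurableType d} {R : realType} (f : T -> R) (a : R) :
  measurable_fun setT f -> measurable [set t | a < f t].
Proof.
move=> mf; rewrite (_ : [set t | a < f t] = f @^-1` `]a, +oo[%classic).
  by apply: mpre => //; exact: measurable_itv.
by apply/seteqP; split => t /=; rewrite in_itv /= andbT.
Qed.

Lemma pre_lt {d} {T : measurableType d} {R : realType} (f : T -> R) (a : R) :
  f @^-1` `]a, +oo[%classic = [set t | a < f t].
Proof. by apply/seteqP; split => t /=; rewrite in_itv /= andbT. Qed.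

Definition Hyp {d} {T : measurableType d} {R : realType} (P : probability T R)
  (N : nat) (X : nat -> T -> R) (th : R) (k : nat) : Prop :=
  exists C s0, 0 < s0 /\ forall s, s0 <= s -> forall B : nat -> set R,
    (forall i, measurable (B i)) -> (forall i, (1 <= i <= k)%N -> B i = setT) ->
    mu P ([set t | s < Z X k t] `&` Rect X N B) * s `^ th <= C * mu P (Rect X N B).

Lemma Rect_upd_lt {d} {T : measurableType d} {R : realType} (X : nat -> T -> R)
  N B j a : (1 <= j <= N)%N -> B j = setT ->
  [set t | a < X j t] `&` Rect X N B = Rect X N (upd B j `]a, +oo[%classic).
Proof.
move=> jN Bj; apply/seteqP; split => t /=.
  move=> [h1 h2] i iN; rewrite /upd; case: eqP => [->|_]; last exact: h2.
  by rewrite /= in_itv /= andbT.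
move=> h; split.
  by have := h j jN; rewrite /upd eqxx /= in_itv /= andbT.
move=> i iN; have := h i iN; rewrite /upd; case: eqP => [->|//].
by rewrite Bj.
Qed.

Lemma base_case {d} {T : measurableType d} {R : realType} (P : probability T R)
  (N : nat) (X : nat -> T -> R) (th : R) :
  (1 <= N)%N ->
  (forall i, measurable_fun setT (X i)) ->
  mutually_independent P (fun i : 'I_N => X i.+1) ->
  bigO_infty (survival P (X 1%N)) (fun x => x `^ (- th)) ->
  Hyp P N X th 1.
Proof.
move=> N1 mX HI HO; have [C1 [s1 [s10 H1]]] := bigO_conv HO.
exists C1, s1; split => // s ss1 B mB BT.
have B1 : B 1%N = setT by apply: BT.
have -> : [set t | s < Z X 1 t] = [set t | s < X 1%N t].
  by apply/seteqP; split => t /=; rewrite Z1.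
have N1' : (1 <= 1 <= N)%N by rewrite N1.
rewrite (Rect_upd_lt X N B 1%N s N1' B1) (indep_upd P N X mX HI B 1%N _ mB N1' B1); last exact: measurable_itv.
rewrite pre_lt mulrAC; apply: ler_wpM2r; first exact: mu_ge0.
exact: H1.
Qed.

Lemma RectT {d} {T : measurableType d} {R : realType} (X : nat -> T -> R) N :
  Rect X N (fun _ => setT) = setT.
Proof. by apply/seteqP; split => t. Qed.

Lemma bigU_measurable {d} {T : measurableType d} (F : nat -> set T) M :
  (forall m, measurable (F m)) -> measurable (\big[setU/set0]_(m < M) F m).
Proof.
move=> mF; elim: M => [|n IHn]; rewrite ?big_ord0 // big_ord_recr /=.
exact: measurableU.
Qed.

Lemma mlt_and {d} {T : measurableType d} {R : realType} (f : T -> R) (a : R) b :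
  measurable_fun setT f -> measurable [set t | b && (a < f t)].
Proof.
move=> mf; case: b => /=; first exact: mlt.
by rewrite (_ : [set t | false] = set0) //; apply/seteqP; split => t.
Qed.

Lemma upd_measurable {R : realType} (B : nat -> set R) j C :
  (forall i, measurable (B i)) -> measurable C -> forall i, measurable (upd B j C i).
Proof. by move=> mB mC i; rewrite /upd; case: ifP. Qed.

Lemma step_case {d} {T : measurableType d} {R : realType} (P : probability T R)
  (N : nat) (X : nat -> T -> R) (th : R) (k : nat) :
  0 < th -> (1 <= k)%N -> (k < N)%N ->
  (forall i, measurable_fun setT (X i)) ->
  mutually_independent P (fun i : 'I_N => X i.+1) ->
  (forall i, (1 <= i <= N)%N -> forall t, 0 <= X i t) ->
  (exists phi : R -> R, frakF phi /\
       bigO_infty (fun x => survival P (X k.+1) (phi x)) (fun x => x `^ (- th)) /\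
       ('E_P[fun t => (X k.+1 t `^ th)%R] < +oo)%E) ->
  Hyp P N X th k -> Hyp P N X th k.+1.
Proof.
move=> th0 k1 kN mX HI X0 [phi [[_ [_ phicvg]] [HO Efin]]] [C [s0 [s00 IH]]].
have [Cj [sj [sj0 Hj]]] := bigO_conv HO.
have eps0 : 0 < (2 * s0)^-1 by rewrite invr_gt0 mulr_gt0.
have [s2 Hs2] := @nearP R _ (cvgr0_norm_lt _ phicvg _ eps0 : \forall t \near +oo, `|phi t / t| < (2 * s0)^-1).
set Y := X k.+1.
have Yge0 : forall t, 0 <= Y t by move=> t; apply: X0; rewrite kN.
have Ej0 := fine_ge0 (expectation_ge0 P (fun t => powR_ge0 (Y t) th)).
set Ej := fine 'E_P[fun t => (Y t `^ th)%R] in Ej0.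
have C0 : 0 <= C.
  have := IH s0 (lexx _) (fun _ => setT) (fun _ => measurableT) (fun _ _ => erefl).
  rewrite RectT muT mulr1 => H; apply: le_trans H.
  by apply: mulr_ge0; [exact: mu_ge0 | exact: powR_ge0].
exists (Cj + C + C * 2 `^ th * Ej), (Num.max s0 (Num.max sj (s2 + 1))); split.
  by apply: lt_le_trans s00 _; rewrite le_max lexx.
move=> s; rewrite !ge_max => /andP[ss0 /andP[ssj ss2]] B mB BT.
have s_pos : 0 < s := lt_le_trans s00 ss0.
have hphi : 2 * s0 * phi s < s.
  have s2s : s2 < s by apply: lt_le_trans ss2; rewrite ltrDl ltr01.
  have := Hs2 s s2s.
  move=> /(le_lt_trans (ler_norm _)); rewrite ltr_pdivrMr // => h.
  by rewrite -ltr_pdivlMl ?mulr_gt0.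
have [M hM] := pow2_bound (phi s).
set A := Rect X N B.
have BY : B k.+1 = setT by apply: BT; rewrite leqnn.
have kN' : (1 <= k.+1 <= N)%N by [].
have BTk : forall i, (1 <= i <= k)%N -> B i = setT.
  by move=> i /andP[i1 ik]; apply: BT; rewrite i1 leqW.
have mA : measurable A := Rect_measurable X N B mX mB.
have mZ := Z_measurable X k mX.
set E1 := [set t | phi s < Y t] `&` A.
set E2 := [set t | s < Z X k t] `&` A.
set F := fun m : nat => [set t | (2 ^+ m <= phi s) && (s / 2 ^+ m.+1 < Z X k t)]
   `&` Rect X N (upd B k.+1 (shell m)).
have mE1 : measurable E1 by apply: measurableI => //; exact: (mlt _ _ (mX _)).
have mE2 : measurable E2 by apply: measurableI => //; exact: (mlt _ _ mZ).
have mF : forall m, measurable (F m).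
  move=> m; apply: measurableI; first exact: (mlt_and _ _ _ mZ).
  apply: Rect_measurable => //; apply: upd_measurable => //.
  exact: shell_measurable.
have cover : [set t | s < Z X k.+1 t] `&` A `<=`
    E1 `|` E2 `|` \big[setU/set0]_(m < M) F m.
  move=> t [hs hA]; rewrite /= ZS in hs.
  have Z0 : 0 <= Z X k t := Z_ge0 X N k t (ltnW kN) X0.
  have [yphi|yphi] := ltP (phi s) (Y t); first by left; left; split.
  have [y1|y1] := ltP (Y t) 1.
    left; right; split => //; apply: lt_le_trans hs _.
    exact: ler_piMr Z0 (ltW y1).
  right; have [m /andP[hm1 hm2]] := shell_exists _ _ y1 (le_lt_trans yphi hM).
  rewrite (bigD1 m) //=; left; split.
    rewrite /= (le_trans hm1 yphi) /= ltr_pdivrMr ?exprn_gt0 //.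
    by apply: lt_le_trans hs _; exact: (ler_wpM2l Z0 (ltW hm2)).
  move=> i iN; rewrite /upd; case: eqP => [->|_]; last exact: hA i iN.
  by rewrite /shell /= in_itv /= hm1 hm2.
have p0 : 0 < s `^ th by apply: powR_gt0.
have hU : mu P (E1 `|` E2 `|` \big[setU/set0]_(m < M) F m) <=
    mu P E1 + mu P E2 + \sum_(m < M) mu P (F m).
  apply: le_trans (muU P _ _ (measurableU _ _ mE1 mE2) (bigU_measurable _ M mF)) _.
  apply: lerD; first exact: muU.
  exact: mu_bigU.
have h1 : mu P E1 * s `^ th <= Cj * mu P A.
  rewrite /E1 (Rect_upd_lt X N B k.+1 (phi s) kN' BY).
  rewrite (indep_upd P N X mX HI B k.+1 _ mB kN' BY); last exact: measurable_itv.
  rewrite pre_lt mulrAC; apply: ler_wpM2r; first exact: mu_ge0.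
  exact: Hj.
have h2 : mu P E2 * s `^ th <= C * mu P A := IH s ss0 B mB BTk.
have h3 : forall m : nat, mu P (F m) * s `^ th <=
    C * 2 `^ th * (((2:R) ^+ m) `^ th * mu P (Y @^-1` shell m)) * mu P A.
  move=> m; rewrite /F; case: (boolP (2 ^+ m <= phi s)) => hm /=; last first.
    rewrite (_ : _ `&` _ = set0); last by apply/seteqP; split => t // [].
    rewrite mu0 mul0r; apply: mulr_ge0; last exact: mu_ge0.
    apply: mulr_ge0; first by apply: mulr_ge0 => //; exact: powR_ge0.
    by apply: mulr_ge0; [exact: powR_ge0 | exact: mu_ge0].
  set s' := s / 2 ^+ m.+1.
  have s'0 : s0 <= s'.
    rewrite /s' ler_pdivlMr ?exprn_gt0 //; apply: ltW; apply: le_lt_trans hphi.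
    rewrite exprS mulrA (mulrC s0 2); apply: ler_wpM2l => //.
    by apply: mulr_ge0 => //; exact: ltW.
  have BTk' : forall i, (1 <= i <= k)%N -> upd B k.+1 (shell m) i = setT.
    move=> i /andP[i1 ik]; rewrite /upd ifF; first by apply: BTk; rewrite i1.
    by apply/negbTE; rewrite neq_ltn ltnS ik.
  have := IH s' s'0 (upd B k.+1 (shell m))
    (upd_measurable B k.+1 (shell m) mB (shell_measurable m)) BTk'.
  rewrite (indep_upd P N X mX HI B k.+1 _ mB kN' BY (shell_measurable m)) => H.
  have ps : s `^ th = s' `^ th * (2 `^ th * ((2:R) ^+ m) `^ th).
    rewrite -powRM ?exprn_ge0 // -powRM ?exprn_ge0 ?mulr_ge0 ?divr_ge0 //;
      try exact: ltW.
    by rewrite -exprS /s' mulfVK // expf_neq0.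
  rewrite ps mulrA; apply: le_trans (ler_wpM2r _ H) _.
    by apply: mulr_ge0; exact: powR_ge0.
  rewrite le_eqVlt; apply/orP; left; apply/eqP; ring.
have hsum : (\sum_(m < M) mu P (F m)) * s `^ th <= C * 2 `^ th * Ej * mu P A.
  rewrite mulr_suml; apply: (le_trans (y := \sum_(m < M) C * 2 `^ th *
    (((2:R) ^+ m) `^ th * mu P (Y @^-1` shell m)) * mu P A)).
    by apply: ler_sum => m _; exact: h3.
  rewrite -mulr_suml -mulr_sumr; apply: ler_wpM2r; first exact: mu_ge0.
  apply: ler_wpM2l; first by apply: mulr_ge0 => //; exact: powR_ge0.
  exact: (shell_sum P Y th M th0 (mX _) Yge0 Efin).
have mL : measurable ([set t | s < Z X k.+1 t] `&` A).
  by apply: measurableI => //; apply: mlt; exact: Z_measurable.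
have mR : measurable (E1 `|` E2 `|` \big[setU/set0]_(m < M) F m).
  by apply: measurableU; [exact: measurableU | exact: bigU_measurable].
apply: le_trans (ler_wpM2r (ltW p0) (mu_le P _ _ mL mR cover)) _.
apply: le_trans (ler_wpM2r (ltW p0) hU) _.
rewrite !mulrDl; apply: lerD; first exact: lerD.
exact: hsum.
Qed.

Theorem theorem10 (R : realType) (d : measure_display) (T : measurableType d)
  (P : probability T R) (N : nat) (X : nat -> T -> R) (theta : R) :
  (1 <= N)%N ->
  0 < theta ->
  (forall i, measurable_fun setT (X i)) ->
  mutually_independent P (fun i : 'I_N => X i.+1) ->
  (forall i, (1 <= i <= N)%N -> forall t, 0 <= X i t) ->
  bigO_infty (survival P (X 1%N)) (fun x => x `^ (- theta)) ->
  (forall j, (2 <= j <= N)%N ->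
     exists phi : R -> R, frakF phi /\
       bigO_infty (fun x => survival P (X j) (phi x)) (fun x => x `^ (- theta)) /\
       ('E_P[fun t => (X j t `^ theta)%R] < +oo)%E) ->
  bigO_infty (survival P (fun t => \prod_(1 <= i < N.+1) X i t))
    (fun x => x `^ (- theta)).
Proof.
move=> N1 th0 mX HI X0 HO1 Hj.
have HN : forall k, (1 <= k <= N)%N -> Hyp P N X theta k.
  elim=> [|k IHk] // kN.
  case: k IHk kN => [|k] IHk kN; first exact: base_case.
  apply: step_case => //.
  - exact: Hj.
  - by apply: IHk; exact: ltnW kN.
have [C [s0 [s00 H]]] : Hyp P N X theta N by apply: HN; rewrite N1 leqnn.
exists C; apply: (@nearP2 R _ s0) => s ss0.
have := H s (ltW ss0) (fun _ => setT) (fun _ => measurableT) (fun _ _ => erefl).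
rewrite RectT muT mulr1 setIT => h.
have p0 : 0 < s `^ theta by apply: powR_gt0; exact: lt_trans s00 ss0.
by rewrite powRN ler_pdivlMr.
Qed.
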